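(* Let $B$ be a simple Bratteli diagram of rank $d\ge2$ and let $\omega\in\mathcal P_B\cap\mathcal O_B(d)$. Then $(X_B,\varphi_\omega)$ is topologically conjugate to an odometer.
   Context: A Bratteli diagram $B$ has levels $V_n$ ($V_0=\{v_0\}$) and edge sets $E_n$ from $V_{n-1}$ to $V_n$ with source/range maps $s,r$; $X_B$ is its Cantor path space; standing assumption: $B$ aperiodic. $B$ is simple if for every $n$ there is $m>n$ with every vertex of $V_n$ joined by a path to every vertex of $V_m$; rank $d$ means $\sup_n|V_n|<\infty$ and $d$ is the least integer with $|V_n|=d$ infinitely often. An ordering $\omega$ is a linear order on each $r^{-1}(v)$; $\mathcal O_B(j)$ is the set of orderings with exactly $j$ maximal infinite paths. $\omega$ is perfect ($\omega\in\mathcal P_B$) if it admits a Vershik map $\varphi_\omega$: a homeomorphism of $X_B$ mapping maximal infinite paths onto minimal ones and sending each non-maximal $x$ to the path obtained by replacing its first non-maximal edge $x_k$ by its successor $\overline{x_k}$ in $r^{-1}(r(x_k))$ and $(x_1,\dots,x_{k-1})$ by the minimal path from $v_0$ to $s(\overline{x_k})$. A homeomorphism $T$ of a Cantor set $Y$ is an odometer if $(Y,T)$ is minimal and topologically conjugate to a Bratteli–Vershik system of a diagram with exactly one vertex at every level. *)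

(* Defs.v *)
From mathcomp Require Import all_boot.
Set Implicit Arguments. Unset Strict Implicit. Unset Printing Implicit Defensive.

(* Level n has vertices 'I_(nV n); the edge set E_{n+1}
   (edges from V_n to V_{n+1}) is 'I_(nE n), with source map [src n] and
   range map [rng n]. *)
Record bratteli := Bratteli {
  nV : nat -> nat;
  nE : nat -> nat;
  src : forall n, 'I_(nE n) -> 'I_(nV n);
  rng : forall n, 'I_(nE n) -> 'I_(nV n.+1);
  nV0 : nV 0 = 1;
  src_surj : forall n (v : 'I_(nV n)), exists e, @src n e = v;
  rng_surj : forall n (v : 'I_(nV n.+1)), exists e, @rng n e = v }.

Arguments src b n e : clear implicits.
Arguments rng b n e : clear implicits.

(* Infinite paths starting at v0: the path space X_B. *)
Definition bpath (B : bratteli) :=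
  { x : forall n, 'I_(nE B n) | forall n, rng B n (x n) = src B n.+1 (x n.+1) }.

Definition pv (B : bratteli) (x : bpath B) (n : nat) : 'I_(nE B n) := sval x n.

(* x and y agree on their first N edges (cylinder neighbourhoods). *)
Definition agree (B : bratteli) (x y : bpath B) (N : nat) : Prop :=
  forall n, n < N -> pv x n = pv y n.

Definition peq (B : bratteli) (x y : bpath B) : Prop := forall n, pv x n = pv y n.

(* continuity for the product (Cantor) topology *)
Definition continuous (B C : bratteli) (f : bpath B -> bpath C) : Prop :=
  forall (x : bpath B) (N : nat), exists M, forall y, agree x y M -> agree (f x) (f y) N.

Definition homeo (B C : bratteli) (f : bpath B -> bpath C) : Prop :=
  exists g : bpath C -> bpath B,
    [/\ continuous f, continuous g,
        (forall x, peq (g (f x)) x) & (forall y, peq (f (g y)) y)].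

(* tail equivalence; B aperiodic = every tail equivalence class is infinite *)
Definition tail_equiv (B : bratteli) (x y : bpath B) : Prop :=
  exists N, forall n, N <= n -> pv x n = pv y n.

Definition aperiodic (B : bratteli) : Prop :=
  forall (x : bpath B) (k : nat) (f : 'I_k -> bpath B),
    exists y, tail_equiv x y /\ forall i, ~ peq (f i) y.

(* conn B n k v w : there is a finite path from vertex v of level n to
   vertex w of level n + k (vertices given by their index). *)
Fixpoint conn (B : bratteli) (n k v w : nat) : Prop :=
  match k with
  | 0 => v = w
  | k'.+1 => exists e : 'I_(nE B n),
      nat_of_ord (src B n e) = v /\ conn B n.+1 k' (rng B n e) w
  end.

Definition simple (B : bratteli) : Prop :=
  forall n, exists m, n < m /\
    forall (v : 'I_(nV B n)) (w : 'I_(nV B m)), conn B n (m - n) v w.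

Definition has_rank (B : bratteli) (d : nat) : Prop :=
  [/\ (exists K, forall n, nV B n <= K),
      (forall N, exists n, N <= n /\ nV B n = d) &
      (forall d', d' < d -> exists N, forall n, N <= n -> nV B n <> d')].

(* An ordering: a (strict) linear order on each r^{-1}(v). *)
Record ordering (B : bratteli) := Ordering {
  olt : forall n, rel 'I_(nE B n);
  olt_fiber : forall n e e', @olt n e e' -> rng B n e = rng B n e';
  olt_irr : forall n e, ~~ @olt n e e;
  olt_trans : forall n e1 e2 e3, @olt n e1 e2 -> @olt n e2 e3 -> @olt n e1 e3;
  olt_total : forall n e e', rng B n e = rng B n e' -> e != e' ->
                 @olt n e e' || @olt n e' e }.
Arguments olt B o n e e' : clear implicits.

Section Ord.
Variables (B : bratteli) (o : ordering B).

Definition is_max n (e : 'I_(nE B n)) : Prop := forall e', ~~ olt B o n e e'.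
Definition is_min n (e : 'I_(nE B n)) : Prop := forall e', ~~ olt B o n e' e.
Definition max_path (x : bpath B) : Prop := forall n, is_max (pv x n).
Definition min_path (x : bpath B) : Prop := forall n, is_min (pv x n).

Definition is_succ n (e e' : 'I_(nE B n)) : Prop :=
  olt B o n e e' /\ forall e'', ~~ (olt B o n e e'' && olt B o n e'' e').

Definition n_max_paths (j : nat) : Prop :=
  exists f : 'I_j -> bpath B,
    [/\ (forall i, max_path (f i)),
        (forall i i', peq (f i) (f i') -> i = i') &
        (forall x, max_path x -> exists i, peq x (f i))].

Definition vershik_step (x y : bpath B) : Prop :=
  exists k,
    [/\ (forall i, i < k -> is_max (pv x i)),
        ~ is_max (pv x k),
        is_succ (pv x k) (pv y k),
        (forall i, k < i -> pv y i = pv x i) &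
        (forall i, i < k -> is_min (pv y i))].

Definition is_vershik (phi : bpath B -> bpath B) : Prop :=
  [/\ homeo phi,
      (forall x, max_path x -> min_path (phi x)),
      (forall y, min_path y -> exists x, max_path x /\ peq (phi x) y) &
      (forall x, ~ max_path x -> vershik_step x (phi x))].

Definition perfect : Prop := exists phi, is_vershik phi.

End Ord.

Definition minimal (B : bratteli) (T : bpath B -> bpath B) : Prop :=
  forall (x y : bpath B) (N : nat), exists k, agree (iter k T x) y N.

Definition conjugate (B C : bratteli) (T : bpath B -> bpath B) (S : bpath C -> bpath C) : Prop :=
  exists h : bpath B -> bpath C, homeo h /\ forall x, peq (h (T x)) (S (h x)).

Definition odometer (C : bratteli) (S : bpath C -> bpath C) : Prop :=
  [/\ minimal S, (forall n, nV C n = 1) & exists o : ordering C, is_vershik o S].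

Definition conj_to_odometer (B : bratteli) (T : bpath B -> bpath B) : Prop :=
  exists (C : bratteli) (S : bpath C -> bpath C), odometer S /\ conjugate T S.

(* Main.v *)
Require Import Defs.
From mathcomp Require Import all_boot zify.
From Stdlib Require Import FunctionalExtensionality ProofIrrelevance Classical PeanoNat.
Set Implicit Arguments. Unset Strict Implicit. Unset Printing Implicit Defensive.


Lemma peq_eq (B : bratteli) (x y : bpath B) : peq x y -> x = y.
Proof.
case: x y => [x px] [y py] E.
have exy : x = y by apply: functional_extensionality_dep => n; exact: E n.
subst y. by rewrite (proof_irrelevance _ px py).
Qed.

Lemma pathP (B : bratteli) (x : bpath B) n : rng B n (pv x n) = src B n.+1 (pv x n.+1).
Proof. exact: (proj2_sig x n). Qed.

Lemma agree_le (B : bratteli) (x y : bpath B) a b : a <= b -> agree x y b -> agree x y a.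
Proof. move=> ab E n na; apply: E; exact: leq_trans na ab. Qed.

Lemma agree_sym (B : bratteli) (x y : bpath B) a : agree x y a -> agree y x a.
Proof. by move=> E n na; rewrite E. Qed.

Lemma agree_trans (B : bratteli) (x y z : bpath B) a : agree x y a -> agree y z a -> agree x z a.
Proof. by move=> E F n na; rewrite E // F. Qed.

Section Abstract.
Variables (B : bratteli) (T Ti : bpath B -> bpath B) (H K : nat -> nat)
  (pos : nat -> bpath B -> nat) (xs : bpath B).
Hypotheses (TTi : forall x, T (Ti x) = x) (H0 : H 0 = 1) (Hpos : forall n, 0 < H n)
  (pos_lt : forall n x, pos n x < H n)
  (posT : forall n x, pos n (T x) = (pos n x + 1) %% H n)
  (pos_loc : forall n x y, agree x y (K n) -> pos n x = pos n y)
  (pos_inj : forall n x y, pos n x = pos n y -> agree x y (K n))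
  (pos_xs : forall n, pos n xs = 0)
  (Kmono : forall n, K n <= K n.+1) (Kge : forall n, n <= K n).

Lemma Kmono' n m : n <= m -> K n <= K m.
Proof.
elim: m => [|m IH]; first by rewrite leqn0 => /eqP->.
rewrite leq_eqVlt => /orP[/eqP->//|]; rewrite ltnS => /IH h.
exact: leq_trans h (Kmono m).
Qed.

Lemma pos_iter n x j : pos n (iter j T x) = (pos n x + j) %% H n.
Proof.
elim: j => [|j IH]; first by rewrite addn0 modn_small.
by rewrite iterS posT IH modnDml addn1 addnS.
Qed.

Lemma iterTTi j x : iter j T (iter j Ti x) = x.
Proof. elim: j => [//|j IH]; by rewrite [iter j.+1 Ti x]iterS iterSr TTi. Qed.

Lemma pos_mono0 n y : pos n.+1 y = 0 -> pos n y = 0.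
Proof.
move=> h; have := pos_inj (etrans h (esym (pos_xs n.+1))) => /(agree_le (Kmono n)).
by move/pos_loc->; rewrite pos_xs.
Qed.

Lemma pos_mod n x : pos n.+1 x %% H n = pos n x.
Proof.
set j := pos n.+1 x; set y := iter j Ti x.
have hx : x = iter j T y by rewrite iterTTi.
have e1 : pos n.+1 y = 0.
  have := pos_iter n.+1 y j; rewrite -hx -/j => e.
  have : (pos n.+1 y + j == 0 + j %[mod H n.+1]).
    by rewrite -e add0n !modn_small // ?pos_lt.
  by rewrite eqn_modDr mod0n modn_small ?pos_lt // => /eqP.
by rewrite hx pos_iter (pos_mono0 e1) add0n.
Qed.

Lemma H_dvd n : H n %| H n.+1.
Proof.
set z := iter (H n.+1) T xs.
have e : pos n.+1 z = 0 by rewrite pos_iter pos_xs add0n modnn.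
have := pos_mono0 e; rewrite pos_iter pos_xs add0n => h.
by apply/dvdnP; exists (H n.+1 %/ H n); rewrite divnK //; rewrite /dvdn h.
Qed.

Lemma H_dvd_le n m : n <= m -> H n %| H m.
Proof.
elim: m => [|m IH]; first by rewrite leqn0 => /eqP->.
rewrite leq_eqVlt => /orP[/eqP->//|]; rewrite ltnS => /IH h.
exact: dvdn_trans h (H_dvd m).
Qed.

Definition q n := H n.+1 %/ H n.
Lemma Hq_eq n : H n.+1 = q n * H n.
Proof. by rewrite /q divnK // H_dvd. Qed.
Lemma q_pos n : 0 < q n.
Proof. have := Hpos n.+1; rewrite Hq_eq; by case: (q n). Qed.

Definition Cb : bratteli.
refine (@Bratteli (fun _ => 1) q (fun n _ => ord0) (fun n _ => ord0) erefl _ _).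
- move=> n v; exists (Ordinal (q_pos n)); by rewrite (ord1 v).
- move=> n v; exists (Ordinal (q_pos n)); by rewrite (ord1 v).
Defined.

Definition posC n (c : bpath Cb) := \sum_(i < n) (pv c i : nat) * H i.

Lemma posC_S n c : posC n.+1 c = posC n c + pv c n * H n.
Proof. by rewrite /posC big_ord_recr. Qed.

Lemma posC0 c : posC 0 c = 0.
Proof. by rewrite /posC big_ord0. Qed.

Lemma posC_lt n c : posC n c < H n.
Proof.
elim: n => [|n IH]; first by rewrite posC0 H0.
rewrite posC_S Hq_eq; have : (pv c n : nat) < q n by [].
move: (pv c n : nat) (q n) (posC n c) (H n) IH => a b p h; nia.
Qed.

Lemma posC_mod n c : posC n.+1 c %% H n = posC n c.
Proof. by rewrite posC_S addnC modnMDl modn_small // posC_lt. Qed.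

Lemma posC_div n c : posC n.+1 c %/ H n = pv c n.
Proof. by rewrite posC_S addnC divnMDl // divn_small ?addn0 // posC_lt. Qed.

Lemma posC_modle n m c : n <= m -> posC m c %% H n = posC n c.
Proof.
elim: m => [|m IH]; first by rewrite leqn0 => /eqP->; rewrite modn_small // posC_lt.
rewrite leq_eqVlt => /orP[/eqP->|]; first by rewrite modn_small // posC_lt.
rewrite ltnS => nm; rewrite posC_S.
have /dvdnP[k ->] := H_dvd_le nm.
by rewrite mulnA addnC modnMDl IH.
Qed.

Lemma agree_posC N n c c' : agree c c' N -> n <= N -> posC n c = posC n c'.
Proof.
move=> E nN; rewrite /posC; apply: eq_bigr => i _; rewrite E //.
exact: leq_trans (ltn_ord i) nN.
Qed.

Lemma posC_agree N c c' : posC N c = posC N c' -> agree c c' N.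
Proof.
elim: N => [|N IH] e; first by move=> n.
have eN : posC N c = posC N c' by rewrite -!(posC_mod N) e.
move=> i; rewrite ltnS leq_eqVlt => /orP[/eqP->|]; last exact: IH.
by apply: val_inj; rewrite /= -!posC_div e.
Qed.

Lemma posC_eq c c' : (forall n, posC n c = posC n c') -> c = c'.
Proof. move=> e; apply: peq_eq => n; exact: (posC_agree (e n.+1)). Qed.

Lemma mkC_lt (F : nat -> nat) n : (F n.+1 %% H n.+1) %/ H n < q n.
Proof. by rewrite ltn_divLR // -Hq_eq ltn_mod. Qed.

Definition mkC (F : nat -> nat) : bpath Cb :=
  exist _ (fun n => Ordinal (mkC_lt F n)) (fun n => erefl).

Lemma posC_mk F : (forall n, F n.+1 %% H n = F n %% H n) ->
  forall n, posC n (mkC F) = F n %% H n.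
Proof.
move=> hF; elim=> [|n IH]; first by rewrite posC0 H0 modn1.
rewrite posC_S IH /=.
set a := F n.+1 %% H n.+1.
have ea : a %% H n = F n %% H n by rewrite /a modn_dvdm ?H_dvd.
by rewrite -ea addnC -divn_eq.
Qed.

Definition S (c : bpath Cb) := mkC (fun n => posC n c + 1).
Definition Si (c : bpath Cb) := mkC (fun n => posC n c + (H n).-1).

Lemma posC_Sc n c : posC n (S c) = (posC n c + 1) %% H n.
Proof. apply: posC_mk => m; by rewrite -modnDml posC_mod. Qed.

Lemma Hpred n : (H n.+1).-1 = (q n).-1 * H n + (H n).-1.
Proof.
rewrite Hq_eq; move: (q_pos n) (Hpos n).
case: (q n) => // a _; case: (H n) => // b _.
by rewrite mulSn /= mulnS; lia.
Qed.

Lemma posC_Sic n c : posC n (Si c) = (posC n c + (H n).-1) %% H n.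
Proof.
apply: posC_mk => m; rewrite Hpred addnCA modnMDl.
by rewrite -modnDml posC_mod.
Qed.

Lemma S_Si c : S (Si c) = c.
Proof.
apply: posC_eq => n; rewrite posC_Sc posC_Sic modnDml -addnA addn1 prednK //.
by rewrite modnDr modn_small // posC_lt.
Qed.

Lemma Si_S c : Si (S c) = c.
Proof.
apply: posC_eq => n; rewrite posC_Sic posC_Sc modnDml -addnA add1n prednK //.
by rewrite modnDr modn_small // posC_lt.
Qed.

Lemma S_cont : continuous S.
Proof.
move=> c N; exists N => c' E; apply: posC_agree.
by rewrite !posC_Sc (agree_posC E).
Qed.

Lemma Si_cont : continuous Si.
Proof.
move=> c N; exists N => c' E; apply: posC_agree.
by rewrite !posC_Sic (agree_posC E).
Qed.

Definition oC : ordering Cb.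
refine (@Ordering Cb (fun n (e e' : 'I_(q n)) => (e : nat) < e') _ _ _ _).
- by [].
- by move=> n e; rewrite ltnn.
- move=> n e1 e2 e3 h1 h2; exact: ltn_trans h1 h2.
- by move=> n e e' _; rewrite -neq_ltn.
Defined.

Lemma maxC n (e : 'I_(q n)) : is_max oC e <-> (e : nat) = (q n).-1.
Proof.
split.
- move=> h; have lt : (q n).-1 < q n by rewrite prednK ?q_pos.
  have := h (Ordinal lt); rewrite /= -leqNgt => le.
  have le2 : (e : nat) <= (q n).-1 by rewrite -ltnS prednK ?q_pos.
  by apply/eqP; rewrite eqn_leq le2 le.
- move=> h e'; rewrite /= -leqNgt h.
  by rewrite -ltnS prednK ?q_pos.
Qed.

Lemma minC n (e : 'I_(q n)) : is_min oC e <-> (e : nat) = 0.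
Proof.
split.
- move=> h; have := h (Ordinal (q_pos n)); rewrite /= -leqNgt leqn0 => /eqP //.
- by move=> h e'; rewrite /= h.
Qed.

Lemma topC n c : (forall i, i < n -> (pv c i : nat) = (q i).-1) <-> (posC n c).+1 = H n.
Proof.
split.
- elim: n => [|n IH] h; first by rewrite posC0 H0.
  rewrite posC_S Hq_eq h // -addSn IH => [|i ilt]; last by apply: h; exact: ltnW.
  have := q_pos n; case: (q n) => // a _ /=; by rewrite mulSn.
- elim: n => [|n IH] e i //.
  have lt1 := posC_lt n c; have lt2 : (pv c n : nat) < q n by [].
  move: e; rewrite posC_S Hq_eq => e.
  have [e1 e2] : (pv c n : nat) = (q n).-1 /\ (posC n c).+1 = H n.
    move: (pv c n : nat) (q n) (posC n c) (H n) lt1 lt2 e (Hpos n) => a b p h' l1 l2 e3 hp.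
    split; nia.
  rewrite ltnS leq_eqVlt => /orP[/eqP->//|]; exact: IH.
Qed.

Lemma baseC n c : (forall i, i < n -> (pv c i : nat) = 0) <-> posC n c = 0.
Proof.
split.
- move=> h; rewrite /posC big1 // => i _; by rewrite h.
- elim: n => [|n IH] e i //; move: e; rewrite posC_S => /eqP; rewrite addn_eq0 => /andP[/eqP e1 e2].
  rewrite ltnS leq_eqVlt => /orP[/eqP->|]; last exact: IH.
  move: e2; rewrite muln_eq0 => /orP[/eqP//|/eqP h]; by have := Hpos n; rewrite h.
Qed.

Lemma notTop k n c : k < n -> (pv c k : nat) != (q k).-1 -> (posC n c).+1 < H n.
Proof.
move=> kn ne; have := posC_lt n c; rewrite leq_eqVlt => /orP[/eqP e|//].
by move/topC: e => /(_ k kn) e; rewrite e eqxx in ne.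
Qed.

Lemma S_vershik : is_vershik oC S.
Proof.
split.
- exists Si; split; [exact: S_cont | exact: Si_cont | by move=> x; rewrite Si_S | by move=> x; rewrite S_Si].
- move=> c hc n; apply/minC.
  have t : (posC n.+1 c).+1 = H n.+1 by apply/topC => i _; apply/maxC.
  by rewrite /= addn1 t modnn div0n.
- move=> y hy.
  have hF : forall n, (H n.+1).-1 %% H n = (H n).-1 %% H n by move=> n; rewrite Hpred modnMDl.
  exists (mkC (fun n => (H n).-1)); split.
  + move=> n; apply/maxC; have t : (posC n.+1 (mkC (fun n => (H n).-1))).+1 = H n.+1.
      by rewrite posC_mk // modn_small ?prednK // prednK.
    by move/topC: t => /(_ n (ltnSn n)).
  + move=> n; congr (pv _ n); apply: posC_eq => m.
    have e : (H m).-1 %% H m = (H m).-1 by rewrite modn_small // prednK.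
    rewrite posC_Sc posC_mk // e addn1 prednK // modnn.
    by apply/esym/baseC => i _; apply/minC.
- move=> c hc.
  have [k0 hk0] : exists k, (pv c k : nat) != (q k).-1.
    apply: NNPP => hn; apply: hc => n; apply/maxC; apply/eqP; apply: negbNE; apply/negP => h.
    by apply: hn; exists n.
  pose P k := (pv c k : nat) != (q k).-1.
  have exP : exists k, P k by exists k0.
  case: (ex_minnP exP) => k Pk mink; rewrite /P in Pk.
  have maxb : forall i, i < k -> (pv c i : nat) = (q i).-1.
    move=> i ik; apply/eqP; apply: negbNE; apply/negP => Pi.
    by have := mink i Pi; rewrite leqNgt ik.
  have tk : (posC k c).+1 = H k by apply/topC.
  exists k; split.
  + by move=> i ik; apply/maxC; apply: maxb.
  + by move/maxC => e; rewrite e eqxx in Pk.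
  + have ck : (pv c k : nat).+1 < q k.
      have : (pv c k : nat) <= (q k).-1 by rewrite -ltnS prednK ?q_pos.
      rewrite leq_eqVlt.
      by case/orP => [/eqP e|]; [rewrite e eqxx in Pk | rewrite -ltnS prednK ?q_pos].
    have ev : (pv (S c) k : nat) = (pv c k).+1.
      rewrite /= posC_S addnAC addn1 tk -mulSn modn_small; first by rewrite mulnK.
      by rewrite Hq_eq ltn_mul2r Hpos ck.
    split; first by change ((pv c k : nat) < pv (S c) k); rewrite ev.
    move=> e''; change (~~ (((pv c k : nat) < e'') && ((e'' : nat) < pv (S c) k))).
    by rewrite ev ltnS; apply/negP => /andP[h1 h2]; have := leq_trans h1 h2; rewrite ltnn.
  + move=> i ki; apply: val_inj => /=.
    rewrite modn_small; last by rewrite addn1; apply: (notTop (k := k)) => //; exact: ltnW.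
    rewrite posC_S addnAC addnC divnMDl // divn_small ?addn0 // addn1.
    by apply: (notTop (k := k)).
  + move=> i ik; apply/minC => /=.
    have t : (posC i.+1 c).+1 = H i.+1 by apply/topC => j ji; apply: maxb; exact: leq_trans ji ik.
    by rewrite addn1 t modnn div0n.
Qed.

Lemma posC_iterS n k c : posC n (iter k S c) = (posC n c + k) %% H n.
Proof.
elim: k => [|k IH]; first by rewrite addn0 modn_small // posC_lt.
by rewrite iterS posC_Sc IH modnDml addn1 addnS.
Qed.

Lemma S_minimal : minimal S.
Proof.
move=> c c' N; exists (posC N c' + (H N - posC N c)).
apply: posC_agree; rewrite posC_iterS addnCA subnKC ?(ltnW (posC_lt _ _)) //.
by rewrite addnC modnDl modn_small // posC_lt.
Qed.

Definition h (x : bpath B) := mkC (fun n => pos n x).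

Lemma posC_h n x : posC n (h x) = pos n x.
Proof.
rewrite posC_mk ?modn_small //; move=> m.
by rewrite pos_mod modn_small.
Qed.

Definition zz p := iter p T xs.
Lemma pos_zz n p : pos n (zz p) = p %% H n.
Proof. by rewrite /zz pos_iter pos_xs. Qed.

Lemma zz_agree c a b : a <= b -> agree (zz (posC a c)) (zz (posC b c)) (K a).
Proof. move=> ab; apply: pos_inj; rewrite !pos_zz (posC_modle c ab) modn_small //; exact: posC_lt. Qed.

Lemma g_path (c : bpath Cb) m :
  rng B m (pv (zz (posC m.+1 c)) m) = src B m.+1 (pv (zz (posC m.+2 c)) m.+1).
Proof.
rewrite (zz_agree c (leqnSn m.+1) (n := m)) ?pathP //.
Qed.

Definition g (c : bpath Cb) : bpath B :=
  exist _ (fun m => pv (zz (posC m.+1 c)) m) (g_path c).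

Lemma g_agree c n : agree (g c) (zz (posC n c)) (K n).
Proof.
move=> i iK; rewrite /pv /=; rewrite -/(pv (zz (posC i.+1 c)) i) -/(pv (zz (posC n c)) i).
case: (leqP i.+1 n) => hi.
- apply: (zz_agree c hi); exact: Kge.
- apply/esym; apply: (zz_agree c); [exact: ltnW | exact: iK].
Qed.

Lemma pos_g n c : pos n (g c) = posC n c.
Proof. by rewrite (@pos_loc n _ _ (@g_agree c n)) pos_zz modn_small // posC_lt. Qed.

Lemma h_homeo : homeo h.
Proof.
exists g; split.
- move=> x N; exists (K N) => y E; apply: posC_agree.
  by rewrite !posC_h; apply: pos_loc.
- move=> c N; exists N => c' E i iN; rewrite /pv /=.
  by rewrite (agree_posC E iN).
- move=> x m; rewrite /pv /= -/(pv (zz (posC m.+1 (h x))) m) posC_h.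
  apply: (pos_inj (n := m.+1)); [by rewrite pos_zz modn_small | exact: Kge].
- move=> c n; congr (pv _ n); apply: posC_eq => m; by rewrite posC_h pos_g.
Qed.

Theorem abstract_odometer : conj_to_odometer T.
Proof.
exists Cb, S; split.
- split; [exact: S_minimal | by [] | exists oC; exact: S_vershik].
- exists h; split; first exact: h_homeo.
  move=> x n; congr (pv _ n); apply: posC_eq => m.
  by rewrite posC_h posT posC_Sc posC_h.
Qed.

End Abstract.


Lemma sum_sub (I : finType) (P Q : pred I) (F : I -> nat) :
  (forall i, P i -> Q i) -> \sum_(i | P i) F i <= \sum_(i | Q i) F i.
Proof.
move=> PQ; rewrite big_mkcond [X in _ <= X]big_mkcond; apply: leq_sum => i _.
by case Pi: (P i); first rewrite PQ.
Qed.

Section Rank.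
Variables (B : bratteli) (o : ordering B).

Fixpoint hgt (n : nat) : 'I_(nV B n) -> nat :=
  match n return 'I_(nV B n) -> nat with
  | 0 => fun _ => 1
  | n'.+1 => fun w => \sum_(e : 'I_(nE B n') | rng B n' e == w) hgt (src B n' e)
  end.

Lemma hgt_S n w : hgt w = \sum_(e : 'I_(nE B n) | rng B n e == w) hgt (src B n e).
Proof. by []. Qed.

Lemma hgt_pos n v : 0 < @hgt n v.
Proof.
elim: n v => [//|n IH] v; have [e <-] := rng_surj v.
rewrite hgt_S (bigD1 e) //=; exact: leq_trans (IH _) (leq_addr _ _).
Qed.

Definition cc n (e : 'I_(nE B n)) := \sum_(e' | olt B o n e' e) hgt (src B n e').

Lemma cc_plus n (e : 'I_(nE B n)) :
  cc e + hgt (src B n e) = \sum_(e' | olt B o n e' e || (e' == e)) hgt (src B n e').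
Proof.
rewrite [RHS](bigD1 e) ?eqxx ?orbT //= addnC; congr (_ + _); apply: eq_bigl => e'.
case: (eqVneq e' e) => [->|ne]; first by rewrite (negbTE (olt_irr o e)).
by rewrite orbF andbT.
Qed.

Lemma cc_le n (e : 'I_(nE B n)) : cc e + hgt (src B n e) <= hgt (rng B n e).
Proof.
rewrite cc_plus hgt_S; apply: sum_sub => e' /orP[/olt_fiber->|/eqP->] //.
Qed.

Definition is_max' := is_max o.
Lemma cc_max n (e : 'I_(nE B n)) : is_max o e -> cc e + hgt (src B n e) = hgt (rng B n e).
Proof.
move=> me; rewrite cc_plus hgt_S; apply: eq_bigl => e'.
case: (eqVneq e' e) => [->|ne]; first by rewrite orbT eqxx.
rewrite orbF; apply/idP/idP => [/olt_fiber->//|/eqP hr].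
have := olt_total o hr ne; by rewrite (negbTE (me e')) orbF.
Qed.

Lemma cc_min n (e : 'I_(nE B n)) : is_min o e -> cc e = 0.
Proof. move=> me; rewrite /cc big1 // => e' h; by have := me e'; rewrite h. Qed.

Lemma cc_succ n (e e' : 'I_(nE B n)) : is_succ o e e' -> cc e' = cc e + hgt (src B n e).
Proof.
case=> lt nb; rewrite cc_plus; apply: eq_bigl => f.
case: (eqVneq f e) => [->|ne]; first by rewrite lt orbT.
rewrite orbF; apply/idP/idP => [h|h]; last exact: olt_trans h lt.
have hr : rng B n f = rng B n e by rewrite (olt_fiber h) (olt_fiber lt).
case/orP: (olt_total o hr ne) => // h2.
by have := nb f; rewrite h2 h.
Qed.

Lemma cc_gt n (e e' : 'I_(nE B n)) : olt B o n e e' -> cc e + hgt (src B n e) <= cc e'.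
Proof.
move=> lt; rewrite cc_plus; apply: sum_sub => f /orP[h|/eqP->//].
exact: olt_trans h lt.
Qed.

Definition rank N (x : bpath B) := \sum_(i < N) cc (pv x i).
Definition vtxo n (x : bpath B) := src B n (pv x n).
Definition Top N (x : bpath B) := forall i, i < N -> is_max o (pv x i).
Definition Base N (x : bpath B) := forall i, i < N -> is_min o (pv x i).

Lemma rank_S N x : rank N.+1 x = rank N x + cc (pv x N).
Proof. by rewrite /rank big_ord_recr. Qed.
Lemma rank0 x : rank 0 x = 0.
Proof. by rewrite /rank big_ord0. Qed.

Lemma vtxo_S N x : vtxo N.+1 x = rng B N (pv x N).
Proof. by rewrite /vtxo pathP. Qed.

Lemma rank_lt N x : rank N x < hgt (vtxo N x).
Proof.
elim: N => [|N IH]; first by rewrite rank0.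
rewrite rank_S vtxo_S; apply: leq_trans (cc_le _).
rewrite addnC ltn_add2l; exact: IH.
Qed.

Lemma rank_top N x : Top N x -> (rank N x).+1 = hgt (vtxo N x).
Proof.
elim: N => [|N IH] t; first by rewrite rank0.
rewrite rank_S vtxo_S -cc_max; last exact: t.
have tN : Top N x by move=> i iN; apply: t; exact: ltnW.
by rewrite -addSn (IH tN) addnC.
Qed.

Lemma rank_base N x : Base N x -> rank N x = 0.
Proof. move=> b; rewrite /rank big1 // => i _; apply: cc_min; exact: b. Qed.

Lemma rank_inj N x y : vtxo N x = vtxo N y -> rank N x = rank N y -> agree x y N.
Proof.
elim: N => [|N IH] ev er; first by move=> i.
move: ev er; rewrite !vtxo_S !rank_S => ev er.
have exy : pv x N = pv y N.
  apply/eqP; apply: contraT => ne.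
  have key : forall a b : bpath B, olt B o N (pv a N) (pv b N) ->
      rank N a + cc (pv a N) < rank N b + cc (pv b N).
    move=> a b lt; apply: leq_trans (leq_addl _ _).
    apply: leq_trans (cc_gt lt); rewrite addnC -addnS leq_add2l.
    exact: rank_lt.
  case/orP: (olt_total o ev ne) => /key; by rewrite er ltnn.
have ev' : vtxo N x = vtxo N y by rewrite /vtxo exy.
move: er; rewrite exy => /addIn er.
move=> i; rewrite ltnS leq_eqVlt => /orP[/eqP->//|]; exact: IH.
Qed.

Lemma top_agree N x y : Top N x -> Top N y -> vtxo N x = vtxo N y -> agree x y N.
Proof.
move=> tx ty ev; apply: rank_inj => //.
by apply: succn_inj; rewrite !rank_top // ev.
Qed.

Lemma base_agree N x y : Base N x -> Base N y -> vtxo N x = vtxo N y -> agree x y N.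
Proof. by move=> bx by' ev; apply: rank_inj => //; rewrite !rank_base. Qed.

Lemma vtxo_agree N x y : agree x y N.+1 -> vtxo N x = vtxo N y.
Proof. by move=> E; rewrite /vtxo E. Qed.

Lemma rank_agree N x y : agree x y N -> rank N x = rank N y.
Proof.
move=> E; rewrite /rank; apply: eq_bigr => i _; by rewrite E.
Qed.

Lemma step_rank x y k :
  (forall i, i < k -> is_max o (pv x i)) -> is_succ o (pv x k) (pv y k) ->
  (forall i, k < i -> pv y i = pv x i) -> (forall i, i < k -> is_min o (pv y i)) ->
  forall N, k < N -> rank N y = (rank N x).+1.
Proof.
move=> mx sc eq mn; elim=> [//|N IH]; rewrite ltnS leq_eqVlt => /orP[/eqP<-|kN].
- rewrite !rank_S (rank_base mn) add0n (cc_succ sc) -addSn (rank_top mx) addnC; reflexivity.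
- by rewrite !rank_S IH // eq.
Qed.

Variable (phi : bpath B -> bpath B).
Hypothesis Hv : is_vershik o phi.

Lemma V1 N x : ~ Top N x -> vtxo N (phi x) = vtxo N x /\ rank N (phi x) = (rank N x).+1.
Proof.
move=> nt; case: Hv => _ _ _ st.
have nm : ~ max_path o x by move=> m; apply: nt => i _; exact: m.
have [k [mx nmk sc eqk mn]] := st x nm.
have kN : k < N.
  rewrite ltnNge; apply/negP => Nk; apply: nt => i iN; apply: mx; exact: leq_trans iN Nk.
split; first by rewrite /vtxo eqk.
exact: (@step_rank x (phi x) k mx sc eqk mn N kN).
Qed.

Lemma V2 N x : Top N x -> Base N (phi x).
Proof.
move=> t; case: Hv => _ mm _ st.
case: (classic (max_path o x)) => [m|nm]; first by move=> i _; exact: mm x m i.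
have [k [mx nmk sc eqk mn]] := st x nm.
move=> i iN; apply: mn; rewrite ltnNge; apply/negP => ki.
apply: nmk; apply: t; exact: leq_ltn_trans ki iN.
Qed.

End Rank.


Section Points.
Variable B : bratteli.

Lemma succE_ex n (u : 'I_(nV B n)) : exists e : 'I_(nE B n), src B n e == u.
Proof. by have [e he] := src_surj u; exists e; apply/eqP. Qed.

Definition succE n (u : 'I_(nV B n)) : 'I_(nE B n) := xchoose (succE_ex u).

Lemma succE_src n (u : 'I_(nV B n)) : src B n (succE u) = u.
Proof. exact/eqP/(xchooseP (succE_ex u)). Qed.

Section Ext.
Variables (z : bpath B) (n : nat) (e : 'I_(nE B n)).
Hypothesis hz : src B n e = vtxo n z.

Definition castE j : 'I_(nE B j) :=
  match Nat.eq_dec n j with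
  | left H => eq_rect n (fun k => 'I_(nE B k)) e j H
  | right _ => pv z j
  end.

Lemma castE_n : castE n = e.
Proof.
rewrite /castE; case: (Nat.eq_dec n n) => [H|//].
by rewrite (eq_irrelevance H erefl).
Qed.

Lemma castE_ne j : n <> j -> castE j = pv z j.
Proof. by rewrite /castE; case: (Nat.eq_dec n j). Qed.

Lemma src_castE j : src B j (castE j) = src B j (pv z j).
Proof.
rewrite /castE; case: (Nat.eq_dec n j) => [H|//].
by case: j / H.
Qed.

Fixpoint xx (j : nat) : 'I_(nE B j) :=
  match j with
  | 0 => castE 0
  | j'.+1 => if n <= j' then succE (rng B j' (xx j')) else castE j'.+1
  end.

Lemma xx_lt j : j < n -> xx j = pv z j.
Proof.
case: j => [|j] jn /=; first by rewrite castE_ne //; move=> h; rewrite h in jn.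
rewrite ifN; last by rewrite -ltnNge; exact: ltnW.
by rewrite castE_ne // => h; rewrite h ltnn in jn.
Qed.

Lemma xx_cast j : j <= n -> xx j = castE j.
Proof. case: j => [//|j] jn /=; by rewrite ifN // -ltnNge. Qed.

Lemma xx_n : xx n = e.
Proof. by rewrite xx_cast // castE_n. Qed.

Lemma xx_gt j : n <= j -> xx j.+1 = succE (rng B j (xx j)).
Proof. by move=> h /=; rewrite h. Qed.

Lemma xx_path j : rng B j (xx j) = src B j.+1 (xx j.+1).
Proof.
case: (leqP n j) => h; first by rewrite xx_gt // succE_src.
rewrite xx_lt // xx_cast // src_castE; exact: pathP.
Qed.

Definition extp : bpath B := exist _ xx xx_path.

Lemma extp_agree : agree z extp n.
Proof. by move=> i iN; rewrite /pv /= xx_lt. Qed.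

Lemma extp_n : pv extp n = e.
Proof. exact: xx_n. Qed.

End Ext.

Lemma conn_pt k : forall n (v w : nat) (z : bpath B), conn B n k v w ->
  nat_of_ord (vtxo n z) = v ->
  exists x, [/\ agree z x n, nat_of_ord (vtxo n x) = v & nat_of_ord (vtxo (n + k) x) = w].
Proof.
elim: k => [|k IH] n v w z /=.
- move=> -> hv; exists z; split => //; by rewrite addn0.
- move=> [e [he hc]] hv.
  have hz : src B n e = vtxo n z by apply: ord_inj; rewrite he hv.
  set x1 := extp hz.
  have h1 : nat_of_ord (vtxo n.+1 x1) = rng B n e by rewrite vtxo_S /x1 extp_n.
  have [x [a1 a2 a3]] := IH n.+1 _ w x1 hc h1.
  exists x; split.
  + apply: agree_trans (extp_agree hz) _; exact: agree_le (leqnSn n) a1.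
  + by rewrite /vtxo -a1 // /x1 extp_n.
  + by rewrite addnS -addSn.
Qed.

End Points.


Lemma fin_bound (I : finType) (P : I -> nat -> Prop) :
  (forall i N N', N <= N' -> P i N -> P i N') -> (forall i, exists N, P i N) ->
  exists N, forall i, P i N.
Proof.
move=> mono ex.
suff : forall s : seq I, exists N, forall i, i \in s -> P i N.
  by case/(_ (enum I)) => N h; exists N => i; apply: h; rewrite mem_enum.
elim=> [|a s [N h]]; first by exists 0.
have [Na ha] := ex a.
exists (maxn N Na) => i; rewrite inE => /orP[/eqP->|/h].
- apply: mono ha; exact: leq_maxr.
- apply: mono; exact: leq_maxl.
Qed.

Lemma sum_prefix (F : nat -> nat) a b : a <= b -> \sum_(t < a) F t <= \sum_(t < b) F t.
Proof. move=> ab; rewrite (big_ord_widen b F ab); exact: sum_sub. Qed.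

Lemma vtxo_agreeS (B : bratteli) N (x y : bpath B) : 0 < N -> agree x y N -> vtxo N x = vtxo N y.
Proof. case: N => [//|N] _ a; rewrite !vtxo_S a //. Qed.

Section Main.
Variables (B : bratteli) (d : nat) (o : ordering B) (phi : bpath B -> bpath B)
  (f : 'I_d -> bpath B).
Hypotheses (Hv : is_vershik o phi) (fmax : forall i, max_path o (f i))
  (finj : forall i j, f i = f j -> i = j) (phi_inj : injective phi)
  (phi_cont : continuous phi) (d0 : 0 < d).

Definition mp i := phi (f i).
Definition i0 : 'I_d := Ordinal d0.
Definition xs := mp i0.

Lemma mp_min i : min_path o (mp i).
Proof. case: Hv => _ h _ _; exact: h. Qed.

Lemma mp_inj i j : mp i = mp j -> i = j.
Proof. by move/phi_inj/finj. Qed.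

Lemma ex_n0 : exists n0, forall p : 'I_d * 'I_d, p.1 != p.2 ->
  ~ agree (f p.1) (f p.2) n0 /\ ~ agree (mp p.1) (mp p.2) n0.
Proof.
apply: (fin_bound (P := fun p N => p.1 != p.2 ->
  ~ agree (f p.1) (f p.2) N /\ ~ agree (mp p.1) (mp p.2) N)).
- move=> p N N' le h ne; have [h1 h2] := h ne; split => a; [apply: h1|apply: h2];
  exact: agree_le le a.
- move=> [i j] /=.
  have key : forall x y : bpath B, x <> y -> exists N, ~ agree x y N.
    move=> x y ne; apply: NNPP => hn; apply: ne; apply: peq_eq => n.
    apply: NNPP => hn2; apply: hn; exists n.+1 => a; apply: hn2; apply: a; exact: ltnSn.
  case: (eqVneq i j) => [->|ne]; first by exists 0.
  have [N1 h1] : exists N, ~ agree (f i) (f j) N by apply: key => /finj e; rewrite e eqxx in ne.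
  have [N2 h2] : exists N, ~ agree (mp i) (mp j) N by apply: key => /mp_inj e; rewrite e eqxx in ne.
  exists (maxn N1 N2) => _; split => a.
  + apply: h1; apply: agree_le a; exact: leq_maxl.
  + apply: h2; apply: agree_le a; exact: leq_maxr.
Qed.

Lemma ex_Kc n0 : exists Kc, forall i, forall y, agree (f i) y Kc -> agree (mp i) (phi y) n0.
Proof.
apply: (fin_bound (P := fun i K => forall y, agree (f i) y K -> agree (mp i) (phi y) n0)).
- move=> i N N' le h y a; apply: h; exact: agree_le le a.
- move=> i; have [K hK] := phi_cont (f i) n0; by exists K.
Qed.

Variables (n0 Kc : nat).
Hypotheses (hn0 : forall p : 'I_d * 'I_d, p.1 != p.2 ->
  ~ agree (f p.1) (f p.2) n0 /\ ~ agree (mp p.1) (mp p.2) n0)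
  (hKc : forall i, forall y, agree (f i) y Kc -> agree (mp i) (phi y) n0).

Definition N0 := maxn (maxn n0 Kc) 1.

Section Level.
Variable L : nat.
Hypotheses (LV : nV B L = d) (LN : N0 <= L).

Lemma n0L : n0 <= L.
Proof. apply: leq_trans LN; rewrite /N0; exact: leq_trans (leq_maxl _ _) (leq_maxl _ _). Qed.
Lemma KcL : Kc <= L.
Proof. apply: leq_trans LN; rewrite /N0; exact: leq_trans (leq_maxr _ _) (leq_maxl _ _). Qed.
Lemma L1 : 0 < L.
Proof. apply: leq_trans LN; exact: leq_maxr. Qed.

Definition vM i := vtxo L (f i).
Definition vm i := vtxo L (mp i).

Lemma topf i N : Top o N (f i).
Proof. move=> k _; exact: fmax. Qed.
Lemma basem i N : Base o N (mp i).
Proof. move=> k _; exact: mp_min. Qed.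

Lemma vM_inj : injective vM.
Proof.
move=> i j e; apply/eqP; apply: contraT => ne; exfalso.
have [h _] := @hn0 (i, j) ne; apply: h.
apply: agree_le n0L _; exact: (top_agree (@topf i L) (@topf j L) e).
Qed.

Lemma vm_inj : injective vm.
Proof.
move=> i j e; apply/eqP; apply: contraT => ne; exfalso.
have [_ h] := @hn0 (i, j) ne; apply: h.
apply: agree_le n0L _; exact: (base_agree (@basem i L) (@basem j L) e).
Qed.

Lemma cardL : #|'I_(nV B L)| <= #|'I_d|.
Proof. by rewrite !card_ord LV. Qed.

Lemma vM_onto v : exists i, vM i = v.
Proof. have /codomP[i ->] := inj_card_onto vM_inj cardL v; by exists i. Qed.
Lemma vm_onto v : exists i, vm i = v.
Proof. have /codomP[i ->] := inj_card_onto vm_inj cardL v; by exists i. Qed.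

Definition iM v := odflt i0 [pick i | vM i == v].
Lemma vM_iM v : vM (iM v) = v.
Proof.
rewrite /iM; case: pickP => [i /eqP //|none].
have [i hi] := vM_onto v; by have := none i; rewrite hi eqxx.
Qed.

Definition rho v := vm (iM v).
Lemma rho_inj : injective rho.
Proof. move=> u u' /vm_inj e; by rewrite -(vM_iM u) e vM_iM. Qed.

Lemma KL x : Top o L x -> vtxo L (phi x) = rho (vtxo L x).
Proof.
move=> tx; set i := iM (vtxo L x).
have a1 : agree (f i) x L.
  apply: (top_agree (@topf i L) tx); rewrite /i; exact: (vM_iM (vtxo L x)).
have a2 := hKc (agree_le KcL a1).
have [j hj] := vm_onto (vtxo L (phi x)).
have a3 : agree (mp j) (phi x) L by apply: (base_agree (@basem j L) (V2 Hv tx) hj).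
have ij : i = j.
  apply/eqP; apply: contraT => ne; exfalso; have [_ h] := @hn0 (i, j) ne; apply: h.
  apply: agree_trans a2 _; apply: agree_sym; exact: agree_le n0L a3.
by rewrite -hj /rho -/i ij.
Qed.

Hypothesis hsimple : simple B.

Definition vstar := vtxo L xs.

Lemma step_conn y m : L < m -> ~ Top o m y ->
  [/\ vtxo m (phi y) = vtxo m y, rank o m (phi y) = (rank o m y).+1 &
      fconnect rho (vtxo L y) (vtxo L (phi y))].
Proof.
move=> Lm nt; have [e1 e2] := V1 Hv nt; split => //.
case: (classic (Top o L y)) => [t|nt'].
- rewrite (KL t); exact: fconnect1.
- have [e3 _] := V1 Hv nt'; rewrite e3; exact: connect0.
Qed.

Lemma climb m : L < m -> forall t y, hgt (vtxo m y) = (rank o m y + t).+1 ->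
  exists z, [/\ vtxo m z = vtxo m y, (rank o m z).+1 = hgt (vtxo m z) &
              fconnect rho (vtxo L y) (vtxo L z)].
Proof.
move=> Lm; elim=> [|t IH] y e.
- exists y; split; [by [] | by rewrite e addn0 | exact: connect0].
- have nt : ~ Top o m y.
    move=> t'; move: e; rewrite -(rank_top t') => /succn_inj /eqP.
    by rewrite -{1}(addn0 (rank o m y)) eqn_add2l.
  have [e1 e2 c1] := step_conn Lm nt.
  have e' : hgt (vtxo m (phi y)) = (rank o m (phi y) + t).+1 by rewrite e1 e2 e addSnnS.
  have [z [z1 z2 z3]] := IH _ e'.
  exists z; split => //; first by rewrite z1 e1.
  exact: connect_trans c1 z3.
Qed.

Lemma reach v : fconnect rho vstar v.
Proof.
have [m' [Lm hc]] := hsimple L.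
set w := vtxo m' xs.
have pt : forall u, exists x, vtxo L x = u /\ vtxo m' x = w.
  move=> u; set z := f (iM u).
  have hz : nat_of_ord (vtxo L z) = u by rewrite /z -/(vM _) vM_iM.
  have [x [a1 a2 a3]] := conn_pt (hc u w) hz.
  exists x; split; first exact: ord_inj.
  apply: ord_inj; move: a3; by rewrite subnKC // ltnW.
have top : forall u, exists z, [/\ vtxo m' z = w, (rank o m' z).+1 = hgt (vtxo m' z) &
    fconnect rho u (vtxo L z)].
  move=> u; have [x [x1 x2]] := pt u.
  have e : hgt (vtxo m' x) = (rank o m' x + (hgt (vtxo m' x) - (rank o m' x).+1)).+1.
    by rewrite -addSn subnKC // rank_lt.
  have [z [z1 z2 z3]] := climb Lm e.
  exists z; split => //; [by rewrite z1 x2 | by rewrite -x1].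
have [z1 [a1 a2 a3]] := top v.
have [z2 [b1 b2 b3]] := top vstar.
have ag : agree z1 z2 m'.
  apply: (@rank_inj _ o); first by rewrite a1 b1.
  by apply: succn_inj; rewrite a2 b2 a1 b1.
have ev : vtxo L z1 = vtxo L z2 by apply: vtxo_agree; exact: agree_le Lm ag.
apply: connect_trans b3 _; rewrite -ev (fconnect_sym rho_inj); exact: a3.
Qed.

Definition ordr := order rho vstar.
Definition ht t := hgt (iter t rho vstar).
Definition offset v := \sum_(t < findex rho vstar v) ht t.
Definition Hq := \sum_(t < ordr) ht t.
Definition posL x := offset (vtxo L x) + rank o L x.

Lemma fx v : findex rho vstar v < ordr.
Proof. exact: findex_max (reach v). Qed.
Lemma iterfx v : iter (findex rho vstar v) rho vstar = v.
Proof. exact: iter_findex (reach v). Qed.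

Lemma offset_add v : offset v + hgt v = \sum_(t < (findex rho vstar v).+1) ht t.
Proof. by rewrite big_ord_recr /= /ht iterfx. Qed.

Lemma posL_lt x : posL x < Hq.
Proof.
rewrite /posL; apply: (@leq_trans (offset (vtxo L x) + hgt (vtxo L x))).
  by rewrite ltn_add2l rank_lt.
rewrite offset_add; apply: sum_prefix; exact: fx.
Qed.

Lemma Hq_pos : 0 < Hq.
Proof. exact: leq_ltn_trans (leq0n _) (posL_lt xs). Qed.

Lemma posL_T x : posL (phi x) = (posL x + 1) %% Hq.
Proof.
case: (classic (Top o L x)) => [t|nt].
- have r1 := rank_top t; have r2 := rank_base (V2 Hv t); have v2 := KL t.
  rewrite /posL r2 v2 addn0.
  set v := vtxo L x in r1 v2 *; set i := findex rho vstar v.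
  have hrv : rho v = iter i.+1 rho vstar by rewrite iterS /i iterfx.
  have iord : i < ordr := fx v.
  case: (ltngtP i.+1 ordr) => [lt|gt|eqo].
  + have e : offset (rho v) = posL x + 1.
      rewrite /offset hrv (findex_iter lt) -/i.
      by rewrite -offset_add /posL -/v -r1 addn1 addnS.
    by rewrite e modn_small // -e -[offset _]addn0 -r2 -v2; exact: posL_lt.
  + by move: gt; rewrite ltnNge iord.
  + have e : rho v = vstar by rewrite hrv eqo iter_order //; exact: rho_inj.
    rewrite e /offset findex0 big_ord0.
    have : posL x + 1 = Hq by rewrite /posL -/v addn1 -addnS r1 offset_add /Hq -/i eqo.
    by move->; rewrite modnn.
- have [e1 e2] := V1 Hv nt.
  have e : posL (phi x) = posL x + 1 by rewrite /posL e1 e2 addn1 addnS.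
  by rewrite -e modn_small // posL_lt.
Qed.

Lemma posL_loc x y : agree x y L -> posL x = posL y.
Proof. by move=> a; rewrite /posL (vtxo_agreeS L1 a) (rank_agree o a). Qed.

Lemma posL_mono x y : findex rho vstar (vtxo L x) < findex rho vstar (vtxo L y) ->
  posL x < posL y.
Proof.
move=> lt; rewrite /posL; apply: (@leq_trans (offset (vtxo L x) + hgt (vtxo L x))).
  by rewrite ltn_add2l rank_lt.
apply: leq_trans (leq_addr _ _); rewrite offset_add; exact: sum_prefix.
Qed.

Lemma posL_inj x y : posL x = posL y -> agree x y L.
Proof.
move=> e.
have ev : vtxo L x = vtxo L y.
  have ef : findex rho vstar (vtxo L x) = findex rho vstar (vtxo L y).
    apply/eqP; apply: contraT; rewrite neq_ltn => /orP[] /posL_mono; by rewrite e ltnn.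
  by rewrite -(iterfx (vtxo L x)) ef iterfx.
apply: (@rank_inj _ o) => //; move: e; by rewrite /posL ev => /addnI.
Qed.

Lemma posL_xs : posL xs = 0.
Proof.
by rewrite /posL -/vstar /offset findex0 big_ord0 (rank_base (@basem i0 L)).
Qed.

End Level.
End Main.


Fixpoint Kseq (ng : nat -> nat) (N0 : nat) (n : nat) : nat :=
  if n is n'.+1 then ng (maxn (Kseq ng N0 n').+1 N0) else 0.

Unset Implicit Arguments.
Theorem mainTheorem14 (B : bratteli) (d : nat) (o : ordering B)
  (phi : bpath B -> bpath B) :
  aperiodic B -> simple B -> has_rank B d -> 2 <= d ->
  perfect o -> n_max_paths o d -> is_vershik o phi ->
  conj_to_odometer phi.
Proof.
move=> _ hs [_ hinf _] d2 _ [f [fm finj0 _]] Hv.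
have d0 : 0 < d by exact: ltnW.
have finj : forall i j, f i = f j -> i = j by move=> i j e; apply: finj0; rewrite e.
have [Ti [c1 c2 gl gr]] : homeo phi by case: Hv.
have phi_inj : injective phi.
  by move=> x y e; rewrite -(peq_eq (gl x)) -(peq_eq (gl y)) e.
have TTi : forall x, phi (Ti x) = x by move=> x; apply: peq_eq.
have [n0 hn0] := ex_n0 finj phi_inj.
have [Kc hKc] := ex_Kc f c1 n0.
have exg : forall N, exists L, (N <= L) && (nV B L == d).
  by move=> N; have [L [h1 h2]] := hinf N; exists L; rewrite h1 h2 eqxx.
pose ng N := xchoose (exg N).
pose K := Kseq ng (N0 n0 Kc).
have goodK : forall n, [/\ nV B (K n.+1) = d, N0 n0 Kc <= K n.+1 & K n < K n.+1].
  move=> n; have /andP[h1 /eqP h2] := xchooseP (exg (maxn (K n).+1 (N0 n0 Kc))).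
  split => //; [exact: leq_trans (leq_maxr _ _) h1 | exact: leq_trans (leq_maxl _ _) h1].
pose H n := if n is n'.+1 then Hq phi f d0 (K n) else 1.
pose pos n x := if n is n'.+1 then posL o phi f d0 (K n) x else 0.
apply: (@abstract_odometer B phi Ti H K pos (xs phi f d0)) => //.
- case=> [//|n]; have [g1 g2 _] := goodK n; exact: (Hq_pos Hv fm d0 hn0 hKc g1 g2 hs).
- case=> [//|n] x; have [g1 g2 _] := goodK n; exact: (posL_lt Hv fm d0 hn0 hKc g1 g2 hs).
- case=> [//|n] x; have [g1 g2 _] := goodK n; exact: (posL_T Hv fm d0 hn0 hKc g1 g2 hs).
- case=> [//|n] x y; have [g1 g2 _] := goodK n; exact: (@posL_loc B d o phi f d0 n0 Kc (K n.+1) g2).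
- case=> [x y _ i //|n] x y; have [g1 g2 _] := goodK n; move=> e; exact: (@posL_inj B d o phi f Hv fm d0 n0 Kc hn0 hKc (K n.+1) g1 g2 hs x y e).
- case=> [//|n]; exact: (posL_xs Hv fm d0).
- by move=> n; have [_ _ g3] := goodK n; exact: ltnW.
- elim=> [//|n IH]; have [_ _ g3] := goodK n; exact: leq_ltn_trans IH g3.
Qed.
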